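(* Let $E/\mathbb{Q}$ be given by the model $y^2=x^3+Ax+B$ ($A,B\in\mathbb{Z}$) described in the context and $X=\max\{|A|^3,|B|^2\}$. Let $0\le\delta\le1$. Let $P,Q\in E(\mathbb{Q})$ satisfy $X^{1/6}\le x(P)<x(Q)$ and $x(P)=x_1/s$, $x(Q)=x_2/s$ with $x_1,x_2\in\mathbb{Z}$, $s$ a positive integer, $\gcd(x_1,s)\le s^\delta$ and $\gcd(x_2,s)\le s^\delta$. Then $$h(P+Q)\le h(P)+2h(Q)+3\delta\,h(s)+2.9.$$
   Context: The model is obtained from a global minimal Weierstrass equation of $E$ by the substitution $x\mapsto \frac{1}{36}(x-3b_2)$, $y\mapsto \frac12(\frac{y}{108}-\frac{a_1}{36}(x-3b_2)-a_3)$. $h$ is the absolute logarithmic Weil height (so $h(s)=\log s$), and $h(P)=h(x(P))$. *)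

(* Defs.v *)
From HB Require Import structures.
From mathcomp Require Import all_boot all_order all_algebra.
From mathcomp Require Import all_classical all_reals all_analysis.
Set Implicit Arguments. Unset Strict Implicit. Unset Printing Implicit Defensive.
Import Order.TTheory GRing.Theory Num.Theory.
Local Open Scope ring_scope.

Section Weierstrass.
Variable K : comNzRingType.

Definition wb2 (a1 a2 a3 a4 a6 : K) : K := a1 ^+ 2 + 4%:R * a2.
Definition wb4 (a1 a2 a3 a4 a6 : K) : K := 2%:R * a4 + a1 * a3.
Definition wb6 (a1 a2 a3 a4 a6 : K) : K := a3 ^+ 2 + 4%:R * a6.
Definition wb8 (a1 a2 a3 a4 a6 : K) : K := a1 ^+ 2 * a6 + 4%:R * a2 * a6 - a1 * a3 * a4
                      + a2 * a3 ^+ 2 - a4 ^+ 2.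
Definition wc4 (a1 a2 a3 a4 a6 : K) : K :=
  let b2 := wb2 a1 a2 a3 a4 a6 in let b4 := wb4 a1 a2 a3 a4 a6 in
  b2 ^+ 2 - 24%:R * b4.
Definition wc6 (a1 a2 a3 a4 a6 : K) : K :=
  let b2 := wb2 a1 a2 a3 a4 a6 in let b4 := wb4 a1 a2 a3 a4 a6 in
  let b6 := wb6 a1 a2 a3 a4 a6 in
  - b2 ^+ 3 + 36%:R * b2 * b4 - 216%:R * b6.
Definition wdisc (a1 a2 a3 a4 a6 : K) : K :=
  let b2 := wb2 a1 a2 a3 a4 a6 in let b4 := wb4 a1 a2 a3 a4 a6 in
  let b6 := wb6 a1 a2 a3 a4 a6 in let b8 := wb8 a1 a2 a3 a4 a6 in
  - b2 ^+ 2 * b8 - 8%:R * b4 ^+ 3 - 27%:R * b6 ^+ 2 + 9%:R * b2 * b4 * b6.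
End Weierstrass.

(* Change of variables x = u^2 x' + r, y = u^3 y' + s u^2 x' + t
   (Silverman, Table 3.1): the new coefficients a_i'. *)
Definition ch_a1 (u r s t a1 : rat) : rat := (a1 + 2%:R * s) / u.
Definition ch_a2 (u r s t a1 a2 : rat) : rat := (a2 - s * a1 + 3%:R * r - s ^+ 2) / u ^+ 2.
Definition ch_a3 (u r s t a1 a3 : rat) : rat := (a3 + r * a1 + 2%:R * t) / u ^+ 3.
Definition ch_a4 (u r s t a1 a2 a3 a4 : rat) : rat := (a4 - s * a3 + 2%:R * r * a2 - (t + r * s) * a1
                           + 3%:R * r ^+ 2 - 2%:R * s * t) / u ^+ 4.
Definition ch_a6 (u r s t a1 a2 a3 a4 a6 : rat) : rat := (a6 + r * a4 + r ^+ 2 * a2 + r ^+ 3 - t * a3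
                           - t ^+ 2 - r * t * a1) / u ^+ 6.

Definition is_int_rat (q : rat) : bool := q \is a Num.int.

Definition global_minimal (a1 a2 a3 a4 a6 : int) : Prop :=
  wdisc a1 a2 a3 a4 a6 != 0 /\
  forall u r s t : rat, u != 0 ->
    let b1 := ch_a1 u r s t a1%:~R
    in let b2 := ch_a2 u r s t a1%:~R a2%:~R
    in let b3 := ch_a3 u r s t a1%:~R a3%:~R
    in let b4 := ch_a4 u r s t a1%:~R a2%:~R a3%:~R a4%:~R
    in let b6 := ch_a6 u r s t a1%:~R a2%:~R a3%:~R a4%:~R a6%:~R in
    [&& is_int_rat b1, is_int_rat b2, is_int_rat b3, is_int_rat b4
      & is_int_rat b6] ->
    `|(wdisc a1 a2 a3 a4 a6)%:~R : rat| <= `|wdisc b1 b2 b3 b4 b6|.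

Definition short_model_of_minimal (A B : int) : Prop :=
  exists a1 a2 a3 a4 a6 : int, global_minimal a1 a2 a3 a4 a6 /\
    A = - 27%:R * wc4 a1 a2 a3 a4 a6 /\ B = - 54%:R * wc6 a1 a2 a3 a4 a6.

Definition on_curve (A B : int) (x y : rat) : Prop :=
  y ^+ 2 = x ^+ 3 + A%:~R * x + B%:~R.

(* x-coordinate of P + Q for affine points P=(x1,y1), Q=(x2,y2) with x1 != x2
   (chord-tangent addition law). *)
Definition add_x (x1 y1 x2 y2 : rat) : rat :=
  let l := (y2 - y1) / (x2 - x1) in l ^+ 2 - x1 - x2.

Definition hrat (R : realType) (q : rat) : R :=
  ln ((Num.max `|numq q| (denq q))%:~R).

(* Main.v *)
Require Import Defs.
From HB Require Import structures.
From mathcomp Require Import all_boot all_order all_algebra.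
From mathcomp Require Import all_classical all_reals all_analysis.
From mathcomp Require Import ring lra.
Import Order.TTheory GRing.Theory Num.Theory.
Local Open Scope ring_scope.

Lemma disc_id (a1 a2 a3 a4 a6 : int) :
  1728%:R * wdisc a1 a2 a3 a4 a6 = wc4 a1 a2 a3 a4 a6 ^+ 3 - wc6 a1 a2 a3 a4 a6 ^+ 2.
Proof. rewrite /wdisc /wc4 /wc6 /wb2 /wb4 /wb6 /wb8 /=. ring. Qed.

Lemma AB_nz A B : short_model_of_minimal A B -> (A != 0) || (B != 0).
Proof.
case=> [a1 [a2 [a3 [a4 [a6 [[hd _] [hA hB]]]]]]].
have [A0|An0] := eqVneq A 0; last by [].
have [B0|Bn0] := eqVneq B 0; last by rewrite orbT.
exfalso.
have c4: wc4 a1 a2 a3 a4 a6 = 0.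
  by move: A0; rewrite hA => /eqP; rewrite mulf_eq0 /= => /eqP.
have c6: wc6 a1 a2 a3 a4 a6 = 0.
  by move: B0; rewrite hB => /eqP; rewrite mulf_eq0 /= => /eqP.
have := disc_id a1 a2 a3 a4 a6; rewrite c4 c6 expr0n /= subrr => /eqP.
by rewrite mulf_eq0 (negbTE hd) orbF.
Qed.

Lemma rat_mul_int (q : rat) (n d : int) : 0 < d -> q * d%:~R = n%:~R ->
  exists2 k : int, 0 < k & (n = numq q * k /\ d = denq q * k).
Proof.
move=> d0 h.
have e : numq q * d = n * denq q.
  apply: (@intr_inj rat); rewrite !intrM numqE -h; ring.
have dd : (denq q %| d)%Z.
  have : (denq q %| numq q * d)%Z by rewrite e dvdz_mull.
  rewrite Gauss_dvdzr //. rewrite /coprimez gcdzC; exact: coprime_num_den.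
exists (d %/ denq q)%Z.
  have := divzK dd => hk.
  have dq := denq_gt0 q.
  move: hk d0; set k := (d %/ denq q)%Z => hk d0.
  rewrite -hk in d0. by rewrite pmulr_lgt0 in d0.
split; last by rewrite mulrC; apply/esym/divzK.
apply: (@mulIf _ (denq q)); first by rewrite gt_eqF ?denq_gt0.
by rewrite -e -mulrA divzK.
Qed.

Lemma rat_sq_int (q : rat) (k : int) : q ^+ 2 = k%:~R -> q = (numq q)%:~R.
Proof.
move=> h.
have e : numq q ^+ 2 = k * denq q ^+ 2.
  apply: (@intr_inj rat); rewrite !expr2 !intrM numqE -h; ring.
have : (denq q %| numq q ^+ 2 * 1)%Z.
  rewrite mulr1 e; apply: dvdz_mull; rewrite expr2; apply: dvdz_mull; exact: dvdzz.
rewrite Gauss_dvdzr; last first.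
  rewrite coprimez_sym; apply: coprimezXl; rewrite /coprimez; exact: coprime_num_den.
move=> d1.
have : `|denq q|%N = 1%N by apply/eqP; rewrite -dvdn1.
have dq := denq_gt0 q.
move=> hd; have : denq q = 1.
  by have := congr1 Posz hd; rewrite gtz0_abs.
move=> d1'; by rewrite -[q in LHS]divq_num_den d1' divr1.
Qed.

Lemma ln12 (R : realType) : ln (12%:R : R) <= 29%:R / 10%:R.
Proof.
have h : (12%:R : R) <= expR (29%:R / 10%:R).
  have -> : (29%:R / 10%:R : R) = 10%:R^-1 * 29%:R by rewrite mulrC.
  rewrite expRM_natr.
  apply: le_trans (_ : (1 + 10%:R^-1) ^+ 29 <= _); first by lra.
  apply: lerXn2r; [rewrite nnegrE; lra | rewrite nnegrE; exact: ltW (expR_gt0 _) |].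
  exact: expR_ge1Dx.
rewrite -(expRK (29%:R / 10%:R)) ler_ln ?posrE ?expR_gt0 //.
Qed.

Lemma ln_prod (R : realType) (a b c d e : R) : 0 < a -> 0 < b -> 0 < c -> 0 < d -> 0 < e ->
  ln (a * (b * b) * (c * c) * (d * e)) = ln a + 2%:R * ln b + 2%:R * ln c + ln d + ln e.
Proof.
move=> *; rewrite !lnM ?posrE ?mulr_gt0 //; ring.
Qed.

Lemma fin_R (R : realType) (lq l12 lQ lg2 lP lg1 d ls : R) :
  lq <= l12 + 2%:R * lQ + 2%:R * lg2 + lP + lg1 -> l12 <= 29%:R / 10%:R ->
  lg1 <= d * ls -> lg2 <= d * ls ->
  lq <= lP + 2%:R * lQ + 3%:R * d * ls + 29%:R / 10%:R.
Proof. move=> *; lra. Qed.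

Lemma dvdz_le_pos (a b : int) : 0 < a -> 0 < b -> (a %| b)%Z -> a <= b.
Proof.
move=> a0 b0 h; rewrite -(gtz0_abs a0) -(gtz0_abs b0) lez_nat.
by apply: dvdn_leq => //; rewrite absz_gt0 gt_eqF.
Qed.

Lemma hP_bound (x : rat) (u S : int) : 0 < S -> x * S%:~R = u%:~R ->
  `|u| <= Num.max `|numq x| (denq x) * gcdz u S /\
  S <= Num.max `|numq x| (denq x) * gcdz u S.
Proof.
move=> S0 h; have [k k0 [hu hS]] := @rat_mul_int x u S S0 h.
have G0 : 0 < gcdz u S.
  by rewrite /gcdz ltz_nat gcdn_gt0 (absz_gt0 S) (gt_eqF S0) orbT.
have kG : k <= gcdz u S.
  apply: dvdz_le_pos => //; rewrite dvdz_gcd; apply/andP; split.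
    by rewrite {1}hu; apply: dvdz_mull; exact: dvdzz.
  by rewrite {1}hS; apply: dvdz_mull; exact: dvdzz.
split.
  rewrite {1}hu normrM (gtr0_norm k0).
  apply: ler_pM; [exact: normr_ge0 | exact: ltW | by rewrite le_max lexx | exact: kG].
rewrite {1}hS.
apply: ler_pM; [exact: ltW (denq_gt0 x) | exact: ltW | by rewrite le_max lexx orbT | exact: kG].
Qed.

Lemma int_bounds (x1 x2 al be m : int) :
  1 <= x1 -> x1 <= x2 -> `|al| <= x1 ^+ 2 -> `|be| <= x1 ^+ 3 ->
  0 <= x1 ^+ 3 + al * x1 + be -> 0 <= x2 ^+ 3 + al * x2 + be ->
  m ^+ 2 = (x1 ^+ 3 + al * x1 + be) * (x2 ^+ 3 + al * x2 + be) ->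
  `|(x1 * x2 + al) * (x1 + x2) + 2%:R * be - 2%:R * m| <= 12%:R * x1 * x2 ^+ 2.
Proof.
move=> u1 uv' hal hbe KP0 KQ0 hm2.
set KP := x1 ^+ 3 + al * x1 + be in KP0 hm2.
set KQ := x2 ^+ 3 + al * x2 + be in KQ0 hm2.
have u0 : 0 <= x1 by apply: le_trans u1.
have v0 : 0 <= x2 by apply: le_trans u0 uv'.
move: hal hbe; rewrite !ler_norml => /andP[al_lo al_hi] /andP[be_lo be_hi].
have e1 : al * x1 <= x1 ^+ 3 by rewrite exprSr; apply: ler_wpM2r.
have e1' : - x1 ^+ 3 <= al * x1 by rewrite exprSr -mulNr; apply: ler_wpM2r.
have KPb : KP <= 3%:R * x1 ^+ 3 by rewrite /KP; lra.
have u2v2 : x1 ^+ 2 <= x2 ^+ 2 by apply: lerXn2r.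
have u3v3 : x1 ^+ 3 <= x2 ^+ 3 by apply: lerXn2r.
have e2 : al * x2 <= x1 ^+ 2 * x2 by apply: ler_wpM2r.
have e3 : x1 ^+ 2 * x2 <= x2 ^+ 3 by rewrite [x2 ^+ 3]exprSr; apply: ler_wpM2r.
have KQb : KQ <= 3%:R * x2 ^+ 3 by rewrite /KQ; lra.
have m2b : m ^+ 2 <= (3%:R * x1 * x2 ^+ 2) ^+ 2.
  rewrite hm2; apply: le_trans (_ : (3%:R * x1 ^+ 3) * (3%:R * x2 ^+ 3) <= _).
    by apply: ler_pM.
  have : x1 ^+ 3 * x2 ^+ 3 <= x1 ^+ 2 * x2 ^+ 4.
    rewrite -subr_ge0.
    have -> : x1 ^+ 2 * x2 ^+ 4 - x1 ^+ 3 * x2 ^+ 3 = x1 ^+ 2 * x2 ^+ 3 * (x2 - x1) by ring.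
    apply: mulr_ge0; last by rewrite subr_ge0.
    by apply: mulr_ge0; apply: exprn_ge0.
  move=> h.
  have -> : (3%:R * x1 ^+ 3) * (3%:R * x2 ^+ 3) = 9%:R * (x1 ^+ 3 * x2 ^+ 3) by ring.
  have -> : (3%:R * x1 * x2 ^+ 2) ^+ 2 = 9%:R * (x1 ^+ 2 * x2 ^+ 4) by ring.
  by apply: ler_wpM2l.
have mb : `|m| <= 3%:R * x1 * x2 ^+ 2.
  rewrite -(@ler_pXn2r _ 2) // ?nnegrE ?mulr_ge0 ?exprn_ge0 ?normr_ge0 //.
  by rewrite -normrX ger0_norm ?sqr_ge0.
move: mb; rewrite ler_norml => /andP[m_lo m_hi].
set N := (x1 * x2 + al) * (x1 + x2) + 2%:R * be - 2%:R * m.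
have f0 : 0 <= x1 * x2 + al.
  have : x1 * x1 <= x1 * x2 by apply: ler_wpM2l.
  rewrite -expr2; lra.
have f1 : x1 * x2 + al <= 2%:R * (x1 * x2).
  have : x1 * x1 <= x1 * x2 by apply: ler_wpM2l.
  rewrite -expr2; lra.
have f2 : (x1 * x2 + al) * (x1 + x2) <= 2%:R * (x1 * x2) * (x1 + x2).
  by apply: ler_wpM2r => //; apply: addr_ge0.
have f3 : 0 <= (x1 * x2 + al) * (x1 + x2) by apply: mulr_ge0 => //; apply: addr_ge0.
have f4 : x1 * x2 * x1 <= x1 * x2 * x2 by apply: ler_wpM2l => //; apply: mulr_ge0.
have f5 : x1 ^+ 3 <= x1 * x2 ^+ 2.
  rewrite exprSr mulrC; apply: ler_wpM2l => //.
have Nb : `|N| <= 12%:R * x1 * x2 ^+ 2.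
  rewrite ler_norml /N; apply/andP; split.
    have : x1 * x2 ^+ 2 = x1 * x2 * x2 by rewrite expr2 mulrA.
    move=> ?; lra.
  have : x1 * x2 ^+ 2 = x1 * x2 * x2 by rewrite expr2 mulrA.
  move=> ?; lra.
by rewrite -ler_norml.
Qed.

Theorem lemma3p2 (R : realType) (A B : int) (delta : R)
  (xP yP xQ yQ : rat) (x1 x2 : int) (s : nat) :
  short_model_of_minimal A B ->
  0 <= delta -> delta <= 1 ->
  on_curve A B xP yP -> on_curve A B xQ yQ ->
  ((Num.max (`|A| ^+ 3) (`|B| ^+ 2))%:~R : R) `^ (6%:R)^-1 <= ratr xP ->
  xP < xQ ->
  (0 < s)%N ->
  xP = x1%:~R / s%:R -> xQ = x2%:~R / s%:R ->
  ((gcdz x1 s)%:~R : R) <= (s%:R : R) `^ delta ->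
  ((gcdz x2 s)%:~R : R) <= (s%:R : R) `^ delta ->
  hrat R (add_x xP yP xQ yQ)
    <= hrat R xP + 2%:R * hrat R xQ + 3%:R * delta * ln (s%:R : R)
       + 29%:R / 10%:R.
Proof.
move=> hmin dl0 dl1 hcP hcQ hX hlt s0 ex1 ex2 g1 g2.
set S : int := Posz s.
have hsq : (s%:R : rat) = S%:~R by rewrite pmulrn.
have S0 : 0 < S by rewrite ltz_nat.
have S0q : (S%:~R : rat) != 0 by rewrite intr_eq0 gt_eqF.
have S0q' : (0 : rat) < S%:~R by rewrite ltr0z.
rewrite hsq in ex1 ex2.
have xPs : xP * S%:~R = x1%:~R by rewrite ex1 divfK.
have xQs : xQ * S%:~R = x2%:~R by rewrite ex2 divfK.
set X := Num.max (`|A| ^+ 3) (`|B| ^+ 2) in hX.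
have X1 : 1 <= X.
  have := @AB_nz A B hmin; case/orP => h.
  - rewrite le_max; apply/orP; left; apply: exprn_ege1.
    by rewrite -gtz0_ge1 normr_gt0.
  - rewrite le_max; apply/orP; right; apply: exprn_ege1.
    by rewrite -gtz0_ge1 normr_gt0.
have X6 : (X%:~R : R) <= (ratr xP) ^+ 6.
  have X0 : 0 <= (X%:~R : R) by rewrite ler0z; apply: le_trans X1.
  have -> : (X%:~R : R) = ((X%:~R) `^ (6%:R)^-1) ^+ 6.
    by rewrite -powR_mulrn ?powR_ge0 // -powRrM mulVf ?powRr1 // pnatr_eq0.
  apply: lerXn2r => //; rewrite nnegrE ?powR_ge0 //.
  exact: le_trans (powR_ge0 _ _) hX.
have xP0 : 0 <= xP.
  rewrite -(ler_rat R) rmorph0; exact: le_trans (powR_ge0 _ _) hX.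
rewrite -(ratr_int R) -rmorphXn ler_rat in X6.
have XS : X * S ^+ 6 <= x1 ^+ 6.
  rewrite -(ler_int rat) intrM !rmorphXn /= -xPs exprMn.
  by apply: ler_wpM2r => //; rewrite exprn_ge0 // ltW.
have u1 : 1 <= x1.
  have u0 : 0 <= x1 by rewrite -(ler_int rat) -xPs mulr_ge0 // ltW.
  rewrite -gtz0_ge1 lt_neqAle u0 andbT; apply/eqP => u0'.
  move: XS; rewrite -u0' expr0n /= => XS.
  have : 0 < X * S ^+ 6 by rewrite mulr_gt0 // ?exprn_gt0 // (lt_le_trans ltr01).
  by rewrite ltNge XS.
have u0 : 0 <= x1 by apply: le_trans u1.
have uv : x1 < x2 by rewrite -(ltr_int rat) -xPs -xQs ltr_pM2r.
have hA : `|A| * S ^+ 2 <= x1 ^+ 2.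
  rewrite -(@ler_pXn2r _ 3) // ?nnegrE ?mulr_ge0 ?exprn_ge0 ?normr_ge0 ?(ltW S0) //.
  rewrite -exprM exprMn -exprM; apply: (le_trans _ XS); apply: ler_wpM2r.
    by rewrite exprn_ge0 // ltW.
  by rewrite le_max lexx.
have hB : `|B| * S ^+ 3 <= x1 ^+ 3.
  rewrite -(@ler_pXn2r _ 2) // ?nnegrE ?mulr_ge0 ?exprn_ge0 ?normr_ge0 ?(ltW S0) //.
  rewrite -exprM exprMn -exprM; apply: (le_trans _ XS); apply: ler_wpM2r.
    by rewrite exprn_ge0 // ltW.
  by rewrite le_max lexx orbT.
set al := A * S ^+ 2.
set be := B * S ^+ 3.
have hal : `|al| <= x1 ^+ 2 by rewrite /al normrM normrX (gtr0_norm S0).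
have hbe : `|be| <= x1 ^+ 3 by rewrite /be normrM normrX (gtr0_norm S0).
set KP := x1 ^+ 3 + al * x1 + be.
set KQ := x2 ^+ 3 + al * x2 + be.
have kP : (S%:~R : rat) ^+ 3 * yP ^+ 2 = KP%:~R.
  rewrite hcP /KP /al /be !(intrD, intrM, rmorphXn) /= ex1; field; exact: S0q.
have kQ : (S%:~R : rat) ^+ 3 * yQ ^+ 2 = KQ%:~R.
  rewrite hcQ /KQ /al /be !(intrD, intrM, rmorphXn) /= ex2; field; exact: S0q.
set M := (S%:~R : rat) ^+ 3 * yP * yQ.
have hM2 : M ^+ 2 = (KP * KQ)%:~R by rewrite intrM -kP -kQ /M; ring.
have hMi := @rat_sq_int _ _ hM2.
set m := numq M in hMi.
have hm2 : m ^+ 2 = KP * KQ.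
  by apply: (@intr_inj rat); rewrite rmorphXn /= -hMi hM2.
have KP0 : 0 <= KP.
  rewrite -(ler_int rat) -kP; apply: mulr_ge0; last exact: sqr_ge0.
  by apply: exprn_ge0; apply: ltW.
have KQ0 : 0 <= KQ.
  rewrite -(ler_int rat) -kQ; apply: mulr_ge0; last exact: sqr_ge0.
  by apply: exprn_ge0; apply: ltW.
have uv' : x1 <= x2 := ltW uv.
have Nb := @int_bounds _ _ _ _ _ u1 uv' hal hbe KP0 KQ0 hm2.
set N := (x1 * x2 + al) * (x1 + x2) + 2%:R * be - 2%:R * m in Nb.
set D := S * (x2 - x1) ^+ 2.
have D0 : 0 < D by rewrite mulr_gt0 // exprn_gt0 // subr_gt0.
have Db : D <= S * x2 ^+ 2.
  apply: ler_wpM2l; first exact: ltW.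
  apply: lerXn2r; rewrite ?nnegrE ?subr_ge0 //; first by apply: le_trans u0 uv'.
  by rewrite lerBlDr lerDl.
have hid : add_x xP yP xQ yQ * D%:~R = N%:~R.
  rewrite /add_x.
  have d0 : xQ - xP != 0 by rewrite subr_eq0 gt_eqF.
  have -> : ((yQ - yP) / (xQ - xP)) ^+ 2 =
      (yQ ^+ 2 + yP ^+ 2 - 2%:R * yP * yQ) / (xQ - xP) ^+ 2.
    by rewrite expr_div_n; congr (_ / _); ring.
  rewrite hcP hcQ /N /D /al /be !(intrD, intrB, intrN, intrM, rmorphXn, rmorph_nat) /= -hMi /M.
  rewrite ex1 ex2 in d0 *.
  field; apply/andP; split; first by rewrite pnatr_eq0 -lt0n.
  by rewrite subr_eq0 eqr_int gt_eqF.
have [k kpos [hNk hDk]] := @rat_mul_int (add_x xP yP xQ yQ) N D D0 hid.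
have [hPu hPS] := @hP_bound xP x1 S S0 xPs.
have [hQv _] := @hP_bound xQ x2 S S0 xQs.
set q := add_x xP yP xQ yQ in hNk hDk *.
rewrite (ger0_norm u0) in hPu.
rewrite (ger0_norm (le_trans u0 uv')) in hQv.
set HP := Num.max `|numq xP| (denq xP) in hPu hPS.
set HQ := Num.max `|numq xQ| (denq xQ) in hQv.
set G1 := gcdz x1 S in hPu hPS.
set G2 := gcdz x2 S in hQv.
have G10 : 0 < G1 by rewrite /G1 /gcdz ltz_nat gcdn_gt0 (absz_gt0 S) (gt_eqF S0) orbT.
have G20 : 0 < G2 by rewrite /G2 /gcdz ltz_nat gcdn_gt0 (absz_gt0 S) (gt_eqF S0) orbT.
have HP0 : 0 < HP by apply: lt_le_trans (denq_gt0 xP) _; rewrite le_max lexx orbT.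
have HQ0 : 0 < HQ by apply: lt_le_trans (denq_gt0 xQ) _; rewrite le_max lexx orbT.
have k1 : 1 <= k by rewrite -gtz0_ge1.
have v0 : 0 <= x2 by apply: le_trans u0 uv'.
have key : Num.max `|numq q| (denq q) <= 12%:R * (HQ * HQ) * (G2 * G2) * (HP * G1).
  have -> : 12%:R * (HQ * HQ) * (G2 * G2) * (HP * G1) =
      12%:R * ((HQ * G2) * (HQ * G2)) * (HP * G1) by ring.
  have vV : x2 * x2 <= (HQ * G2) * (HQ * G2) by apply: ler_pM.
  have c0 : (0 : int) <= 12%:R by [].
  rewrite ge_max; apply/andP; split.
    apply: le_trans (_ : `|N| <= _).
      by rewrite hNk normrM (gtr0_norm kpos); apply: ler_peMr => //; exact: normr_ge0.
    apply: le_trans Nb _.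
    have -> : 12%:R * x1 * x2 ^+ 2 = 12%:R * (x2 * x2) * x1 by rewrite expr2; ring.
    apply: ler_pM => //; first by apply: mulr_ge0 => //; apply: mulr_ge0.
    by apply: ler_pM => //; apply: mulr_ge0.
  apply: le_trans (_ : D <= _).
    by rewrite hDk; apply: ler_peMr => //; exact: ltW (denq_gt0 q).
  apply: le_trans Db _.
  have -> : S * x2 ^+ 2 = 1 * (x2 * x2) * S by rewrite expr2; ring.
  apply: ler_pM => //; first by apply: mulr_ge0 => //; apply: mulr_ge0.
  by apply: ler_pM => //; apply: mulr_ge0.
rewrite /hrat -/q -/HP -/HQ.
apply: (@fin_R R _ (ln 12%:R) _ (ln (G2%:~R)) _ (ln (G1%:~R))).
- have hq0 : (0 : R) < (Num.max `|numq q| (denq q))%:~R.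
    by rewrite ltr0z; apply: lt_le_trans (denq_gt0 q) _; rewrite le_max lexx orbT.
  rewrite -ln_prod ?ltr0z //.
  rewrite ler_ln ?posrE //; last first.
    by rewrite !mulr_gt0 // ltr0z.
  by rewrite -(ler_int R) in key; move: key; rewrite !intrM rmorph_nat.
- exact: ln12.
- rewrite -ln_powR ler_ln ?posrE ?ltr0z //; apply: powR_gt0.
  by rewrite ltr0n.
- rewrite -ln_powR ler_ln ?posrE ?ltr0z //; apply: powR_gt0.
  by rewrite ltr0n.
Qed.
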